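(* For any $\mathcal{L}^S$-theory $\Gamma$, $\Gamma+\Sigma_1$ is consistent if and only if $\Gamma+\Sigma_1^*$ is consistent.
   Context: $\mathcal{L}$ is a countable first-order language containing a binary relation symbol $<$; $\mathcal{L}^S$ is $\mathcal{L}$ expanded by Skolem function symbols and $T_{\mathrm{skolem}}$ the $\mathcal{L}^S$-theory asserting they are Skolem functions. $\lambda$ is a singular cardinal, $\eta=\mathrm{cf}(\lambda)$, $\langle\mu_i;i<\eta\rangle$ an increasing sequence of cardinals with limit $\lambda$, $C=\{c_{ij}\mid i<\eta,j<\mu_i\}$ and $C^*=\{c_{ij}\mid i,j<\omega\}$ are sets of new constant symbols. For a set $D$ of doubly indexed constants, the theory $\Sigma_1$ over $D$ consists of the following sentences, where ''term'' means $\mathcal{L}^S$-term and in every expression $\tau(c_{m_1n_1},\dots,c_{m_kn_k})$ the constants are strictly increasing in the lexicographic order of index pairs, all constants ranging over $D$: (i) $T_{\mathrm{skolem}}$ plus axioms that $<$ is a linear order; (ii) $c_{ij}<c_{kl}$ iff $(i,j)<(k,l)$ lexicographically; (iii) $\tau(c_{i_1j_1},\dots,c_{i_nj_n})<c_{ij}$ whenever $i_1,\dots,i_n<i$; (iv) for increasing $c_{i_1j_1},\dots,c_{i_nj_n}$ with $i_n>1$, any $j$, any $u\ge i_n$, any $l_1,\dots,l_{n-q}$: if $\tau(c_{i_1j_1},\dots,c_{i_nj_n})<c_{(i_n-1)j}$ then $\tau(\bar c,c_{i_{q+1}j_{q+1}},\dots,c_{i_nj_n})=\tau(\bar c,c_{ul_1},\dots,c_{ul_{n-q}})$,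 where $q$ is the greatest integer with $i_q\ne i_n$ ($q=0$ if none) and $\bar c=\langle c_{i_1j_1},\dots,c_{i_qj_q}\rangle$. $\Sigma_1$ denotes this theory over $C$ (an $\mathcal{L}^S(C)$-theory), and $\Sigma_1^*$ this theory over $C^*$ (an $\mathcal{L}^S(C^* )$-theory). *)

(* Defs.v *)
From Stdlib Require Import List Arith Sorted.
Import ListNotations.

Record lang := {
  Fun : Type;
  Rel : Type;
  far : Fun -> nat;
  rar : Rel -> nat;
  ltRel : Rel;
  ltRel_ar : rar ltRel = 2;
  Fun_countable : exists e : Fun -> nat, forall x y, e x = e y -> x = y;
  Rel_countable : exists e : Rel -> nat, forall x y, e x = e y -> x = y
}.

Inductive tm (Sy : Type) : Type :=
| var (n : nat)
| app (f : Sy) (args : list (tm Sy)).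
Arguments var {Sy} n.
Arguments app {Sy} f args.

Inductive fm (Sy R : Type) : Type :=
| bot
| atom (r : R) (args : list (tm Sy))
| eqf (s t : tm Sy)
| imp (p q : fm Sy R)
| all (p : fm Sy R).
Arguments bot {Sy R}.
Arguments atom {Sy R} r args.
Arguments eqf {Sy R} s t.
Arguments imp {Sy R} p q.
Arguments all {Sy R} p.

Definition neg {Sy R} (p : fm Sy R) : fm Sy R := imp p bot.
Definition ex {Sy R} (p : fm Sy R) : fm Sy R := neg (all (neg p)).
Definition orf {Sy R} (p q : fm Sy R) : fm Sy R := imp (neg p) q.

Fixpoint tmap {Sy Sy'} (g : Sy -> Sy') (t : tm Sy) : tm Sy' :=
  match t with
  | var n => var n
  | app f args => app (g f) (map (tmap g) args)
  end.

Fixpoint fmap {Sy Sy' R} (g : Sy -> Sy') (p : fm Sy R) : fm Sy' R :=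
  match p with
  | bot => bot
  | atom r args => atom r (map (tmap g) args)
  | eqf s t => eqf (tmap g s) (tmap g t)
  | imp p q => imp (fmap g p) (fmap g q)
  | all p => all (fmap g p)
  end.

Fixpoint tsubst {Sy} (s : nat -> tm Sy) (t : tm Sy) : tm Sy :=
  match t with
  | var n => s n
  | app f args => app f (map (tsubst s) args)
  end.

Definition up {Sy} (s : nat -> tm Sy) : nat -> tm Sy :=
  fun n => match n with 0 => var 0 | S m => tsubst (fun k => var (S k)) (s m) end.

Fixpoint fsubst {Sy R} (s : nat -> tm Sy) (p : fm Sy R) : fm Sy R :=
  match p with
  | bot => bot
  | atom r args => atom r (map (tsubst s) args)
  | eqf a b => eqf (tsubst s a) (tsubst s b)
  | imp p q => imp (fsubst s p) (fsubst s q)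
  | all p => all (fsubst (up s) p)
  end.

Definition shift {Sy} : nat -> tm Sy := fun n => var (S n).
Definition inst1 {Sy} (t : tm Sy) : nat -> tm Sy :=
  fun n => match n with 0 => t | S m => var m end.

(* 1 + the largest free variable (0 if none) *)
Fixpoint tbound {Sy} (t : tm Sy) : nat :=
  match t with
  | var n => S n
  | app _ args => fold_right max 0 (map tbound args)
  end.

Fixpoint fbound {Sy R} (p : fm Sy R) : nat :=
  match p with
  | bot => 0
  | atom _ args => fold_right max 0 (map tbound args)
  | eqf s t => max (tbound s) (tbound t)
  | imp p q => max (fbound p) (fbound q)
  | all p => pred (fbound p)
  end.

Definition sentence {Sy R} (p : fm Sy R) : Prop := fbound p = 0.

Fixpoint twf {Sy} (ar : Sy -> nat) (t : tm Sy) : Prop :=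
  match t with
  | var _ => True
  | app f args => length args = ar f /\
      (fix go (l : list (tm Sy)) : Prop :=
         match l with [] => True | u :: l' => twf ar u /\ go l' end) args
  end.

Fixpoint fwf {Sy R} (ar : Sy -> nat) (rr : R -> nat) (p : fm Sy R) : Prop :=
  match p with
  | bot => True
  | atom r args => length args = rr r /\ Forall (twf ar) args
  | eqf s t => twf ar s /\ twf ar t
  | imp p q => fwf ar rr p /\ fwf ar rr q
  | all p => fwf ar rr p
  end.

Inductive nd {Sy R} : list (fm Sy R) -> fm Sy R -> Prop :=
| ndAx A p : In p A -> nd A p
| ndImpI A p q : nd (p :: A) q -> nd A (imp p q)
| ndImpE A p q : nd A (imp p q) -> nd A p -> nd A q
| ndAllI A p : nd (map (fsubst shift) A) p -> nd A (all p)
| ndAllE A p t : nd A (all p) -> nd A (fsubst (inst1 t) p)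
| ndRAA A p : nd (neg p :: A) bot -> nd A p
| ndRefl A t : nd A (eqf t t)
| ndEqE A p s t : nd A (eqf s t) -> nd A (fsubst (inst1 s) p) ->
                  nd A (fsubst (inst1 t) p).

Definition consistent {Sy R} (T : fm Sy R -> Prop) : Prop :=
  ~ exists A : list (fm Sy R), (forall p, In p A -> T p) /\ nd A bot.

(* The Skolem expansion L^S: one new function symbol f_phi for every
   L^S-formula phi; variable 0 of phi is the witnessed variable and
   the variables 1..k are the parameters, k = fbound phi - 1. *)

Inductive ssym (L : lang) : Type :=
| Base (f : Fun L)
| Sk (phi : fm (ssym L) (Rel L)).
Arguments Base {L} f.
Arguments Sk {L} phi.

Definition sarity {L : lang} (s : ssym L) : nat :=
  match s with Base f => far L f | Sk phi => pred (fbound phi) end.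

Definition LSfm (L : lang) := fm (ssym L) (Rel L).
Definition LSterm (L : lang) := tm (ssym L).

Definition LS_theory {L : lang} (G : LSfm L -> Prop) : Prop :=
  forall p, G p -> sentence p /\ fwf sarity (rar L) p.

Definition symK (L : lang) (K : Type) := (ssym L + K)%type.
Definition LSKfm (L : lang) (K : Type) := fm (symK L K) (Rel L).
Definition LSKterm (L : lang) (K : Type) := tm (symK L K).

Definition emb {L K} (p : LSfm L) : LSKfm L K := fmap inl p.
Definition embt {L K} (t : LSterm L) : LSKterm L K := tmap inl t.
Definition cst {L K} (k : K) : LSKterm L K := app (inr k) [].

Fixpoint alln {Sy R} (n : nat) (p : fm Sy R) : fm Sy R :=
  match n with 0 => p | S m => all (alln m p) end.

Definition skolem_axiom {L : lang} (phi : LSfm L) : LSfm L :=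
  let k := pred (fbound phi) in
  alln k (imp (ex phi)
    (fsubst (fun n => match n with
                      | 0 => app (Sk phi) (map var (seq 0 k))
                      | S m => var m end) phi)).

Definition T_skolem {L : lang} (p : LSfm L) : Prop :=
  exists phi, p = skolem_axiom phi.

Definition ltf {L : lang} {Sy} (s t : tm Sy) : fm Sy (Rel L) := atom (ltRel L) [s; t].

Definition linord_axioms {L : lang} (p : LSfm L) : Prop :=
  p = all (neg (ltf (L:=L) (var 0) (var 0))) \/
  p = all (all (all (imp (ltf (L:=L) (var 2) (var 1))
                     (imp (ltf (L:=L) (var 1) (var 0)) (ltf (L:=L) (var 2) (var 0)))))) \/
  p = all (all (orf (ltf (L:=L) (var 1) (var 0))
                    (orf (eqf (var 1) (var 0)) (ltf (L:=L) (var 0) (var 1))))).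

(* Doubly indexed constants c_{ij}: i ranges over a well-ordered type
   Row (the ordinal eta, or omega), j over Col i (the cardinal mu_i, or omega). *)

Section Sigma1.
Variable L : lang.
Variable Row : Type.
Variable ltR : Row -> Row -> Prop.
Variable Col : Row -> Type.
Variable ltC : forall i, Col i -> Col i -> Prop.

Definition Cidx := {i : Row & Col i}.

Definition lex (a b : Cidx) : Prop :=
  ltR (projT1 a) (projT1 b) \/
  exists i x y, ltC i x y /\ a = existT _ i x /\ b = existT _ i y.

(* tau(c_{k_0}, ..., c_{k_{n-1}}): variable m of tau is replaced by c_{k_m} *)
Definition instc (ks : list Cidx) (tau : LSterm L) : LSKterm L Cidx :=
  tsubst (fun m => match nth_error ks m with
                   | Some k => cst k
                   | None => var m end) (embt tau).

(* "i > 1" for an ordinal i: there are at least two ordinals below i *)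
Definition gt1 (i : Row) : Prop := exists a b, ltR a b /\ ltR b i.
(* p = i - 1, i.e. i is the successor of p *)
Definition is_pred (p i : Row) : Prop := ltR p i /\ forall x, ~ (ltR p x /\ ltR x i).

Definition Sigma1 (phi : LSKfm L Cidx) : Prop :=
  (exists p, (T_skolem p \/ linord_axioms p) /\ phi = emb p) \/
  (exists a b,
      (lex a b /\ phi = ltf (L:=L) (cst a) (cst b)) \/
      (~ lex a b /\ phi = neg (ltf (L:=L) (cst a) (cst b)))) \/
  (exists (tau : LSterm L) (ks : list Cidx) (i : Row) (j : Col i),
      ks <> [] /\ Sorted lex ks /\ tbound tau <= length ks /\
      (forall k, In k ks -> ltR (projT1 k) i) /\
      phi = ltf (L:=L) (instc ks tau) (cst (existT _ i j))) \/
  (exists (tau : LSterm L) (pre post : list Cidx) (iN p : Row) (j : Col p)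
          (u : Row) (ls : list (Col u)),
      post <> [] /\ Sorted lex (pre ++ post) /\
      tbound tau <= length (pre ++ post) /\
      (forall k, In k post -> projT1 k = iN) /\
      (forall k, In k pre -> projT1 k <> iN) /\
      gt1 iN /\ is_pred p iN /\ (ltR iN u \/ u = iN) /\
      length ls = length post /\
      Sorted lex (pre ++ map (fun l => existT _ u l) ls) /\
      phi = imp (ltf (L:=L) (instc (pre ++ post) tau) (cst (existT _ p j)))
                (eqf (instc (pre ++ post) tau)
                     (instc (pre ++ map (fun l => existT _ u l) ls) tau))).
End Sigma1.

Arguments Sigma1 L {Row} ltR {Col} ltC phi.

Definition plus_theory {L K} (G : LSfm L -> Prop) (Sig : LSKfm L K -> Prop)
  : LSKfm L K -> Prop :=
  fun phi => (exists p, G p /\ phi = emb p) \/ Sig phi.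

Definition Sigma1_star (L : lang) := Sigma1 L lt (Col := fun _ : nat => nat) (fun _ => lt).

Definition inj (A B : Type) : Prop := exists f : A -> B, forall x y, f x = f y -> x = y.
Definition equinum (A B : Type) : Prop :=
  exists f : A -> B, (forall x y, f x = f y -> x = y) /\ (forall y, exists x, f x = y).
Definition card_lt (A B : Type) : Prop := inj A B /\ ~ inj B A.

Definition well_order {A} (lt : A -> A -> Prop) : Prop :=
  (forall x, ~ lt x x) /\ (forall x y z, lt x y -> lt y z -> lt x z) /\
  (forall x y, lt x y \/ x = y \/ lt y x) /\ well_founded lt.

(* a cardinal = an initial ordinal *)
Definition is_cardinal {A} (lt : A -> A -> Prop) : Prop :=
  well_order lt /\ forall a : A, ~ equinum A {x : A | lt x a}.

Definition cofinal {A} (lt : A -> A -> Prop) (P : A -> Prop) : Prop :=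
  forall y, exists x, P x /\ (lt y x \/ y = x).

Definition is_cofinality {E Lam} (ltE : E -> E -> Prop) (ltL : Lam -> Lam -> Prop) : Prop :=
  is_cardinal ltE /\
  (exists h : E -> Lam, cofinal ltL (fun y => exists e, h e = y)) /\
  (forall P : Lam -> Prop, cofinal ltL P -> inj E {y : Lam | P y}).

Definition singular_cardinal {Lam} (ltL : Lam -> Lam -> Prop) {E} (ltE : E -> E -> Prop) :=
  is_cardinal ltL /\ inj nat Lam /\ is_cofinality ltE ltL /\ card_lt E Lam.

Definition increasing_seq_with_limit {E} (ltE : E -> E -> Prop) (M : E -> Type)
  (ltM : forall i, M i -> M i -> Prop) (Lam : Type) : Prop :=
  (forall i, is_cardinal (ltM i)) /\
  (forall i i', ltE i i' -> card_lt (M i) (M i')) /\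
  (forall i, inj (M i) Lam) /\
  (forall X : Type, (forall i, inj (M i) X) -> inj Lam X).

(* Main.v *)
From Stdlib Require Import List Arith Lia Sorted ClassicalEpsilon Classical FunctionalExtensionality FinFun Eqdep ProofIrrelevance.
Import ListNotations.
Require Import Defs.

Section Syn.
Context {Sy : Type}.
Fixpoint tm_ind' (P : tm Sy -> Prop) (Hv : forall n, P (var n))
  (Ha : forall f args, Forall P args -> P (app f args)) (t : tm Sy) : P t :=
  match t with
  | var n => Hv n
  | app f args => Ha f args
     ((fix go (l : list (tm Sy)) : Forall P l :=
        match l with [] => Forall_nil _ | u :: l' => Forall_cons _ (tm_ind' P Hv Ha u) (go l') end) args)
  end.
End Syn.

Lemma tmap_tmap {A B C} (g : B -> C) (h : A -> B) t :
  tmap g (tmap h t) = tmap (fun x => g (h x)) t.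
Proof.
  induction t using tm_ind'; simpl; auto.
  f_equal. rewrite map_map. induction H; simpl; auto. rewrite H, IHForall; auto.
Qed.

Lemma tmap_tsubst {A B} (g : A -> B) s t :
  tmap g (tsubst s t) = tsubst (fun n => tmap g (s n)) (tmap g t).
Proof.
  induction t using tm_ind'; simpl; auto.
  f_equal. rewrite !map_map. induction H; simpl; auto. rewrite H, IHForall; auto.
Qed.

Lemma fmap_fmap {A B C R} (g : B -> C) (h : A -> B) (p : fm A R) :
  fmap g (fmap h p) = fmap (fun x => g (h x)) p.
Proof.
  induction p; simpl; auto.
  - f_equal. rewrite map_map. apply map_ext. intros; apply tmap_tmap.
  - rewrite !tmap_tmap; auto.
  - rewrite IHp1, IHp2; auto.
  - rewrite IHp; auto.
Qed.

Lemma fmap_fsubst {A B R} (g : A -> B) (sg : nat -> tm A) (p : fm A R) :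
  fmap g (fsubst sg p) = fsubst (fun n => tmap g (sg n)) (fmap g p).
Proof.
  revert sg; induction p; intros sg; simpl; auto.
  - f_equal. rewrite !map_map. apply map_ext. intros; apply tmap_tsubst.
  - rewrite !tmap_tsubst; auto.
  - rewrite IHp1, IHp2; auto.
  - rewrite IHp. f_equal. f_equal. apply functional_extensionality. intros [|n]; simpl; auto.
    rewrite tmap_tsubst. reflexivity.
Qed.

Lemma nd_map {A B R} (g : A -> B) (G : list (fm A R)) p :
  nd G p -> nd (map (fmap g) G) (fmap g p).
Proof.
  induction 1; simpl in *.
  - apply ndAx. apply in_map; auto.
  - apply ndImpI; auto.
  - eapply ndImpE; eauto.
  - apply ndAllI. rewrite map_map in *.
    match goal with |- nd (map _ ?L) _ =>
    replace (map (fun x => fsubst shift (fmap g x)) L) with (map (fun x => fmap g (fsubst shift x)) L); [exact IHnd|] end.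
    apply map_ext. intros q. rewrite fmap_fsubst. reflexivity.
  - rewrite fmap_fsubst. simpl in IHnd.
    replace (fun n => tmap g (inst1 t n)) with (@inst1 B (tmap g t)).
    + apply ndAllE; auto.
    + apply functional_extensionality; intros [|n]; reflexivity.
  - apply ndRAA; auto.
  - apply ndRefl.
  - rewrite fmap_fsubst in *.
    replace (fun n => tmap g (inst1 t n)) with (@inst1 B (tmap g t)) by
      (apply functional_extensionality; intros [|n]; reflexivity).
    replace (fun n => tmap g (inst1 s n)) with (@inst1 B (tmap g s)) in IHnd2 by
      (apply functional_extensionality; intros [|n]; reflexivity).
    eapply ndEqE; eauto.
Qed.

Lemma transfer {A B R} (T1 : fm A R -> Prop) (T2 : fm B R -> Prop) :
  (forall l, (forall p, In p l -> T1 p) -> exists g : A -> B, forall p, In p l -> T2 (fmap g p)) ->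
  consistent T2 -> consistent T1.
Proof.
  intros H C [l [Hl Hnd]]. destruct (H l Hl) as [g Hg]. apply C.
  exists (map (fmap g) l). split.
  - intros p Hp. apply in_map_iff in Hp. destruct Hp as [q [<- Hq]]. auto.
  - apply (nd_map g) in Hnd. exact Hnd.
Qed.

Lemma lex_same {R} (ltR : R -> R -> Prop) {C : R -> Type} (ltC : forall i, C i -> C i -> Prop)
  (irr : forall x, ~ ltR x x) i x y :
  lex R ltR C ltC (existT _ i x) (existT _ i y) <-> ltC i x y.
Proof.
  split.
  - intros [H|[i' [x' [y' [Hl [E1 E2]]]]]]; simpl in *.
    + exfalso; eapply irr; eauto.
    + inversion E1; subst. apply inj_pair2 in E1. apply inj_pair2 in E2. subst. auto.
  - intros H. right. exists i, x, y. auto.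
Qed.

Lemma lex_diff {R} (ltR : R -> R -> Prop) {C : R -> Type} (ltC : forall i, C i -> C i -> Prop)
  a b : projT1 a <> projT1 b ->
  (lex R ltR C ltC a b <-> ltR (projT1 a) (projT1 b)).
Proof.
  intros Hd. split.
  - intros [H|[i' [x' [y' [Hl [E1 E2]]]]]]; auto.
    exfalso; apply Hd; subst; reflexivity.
  - intros H; left; auto.
Qed.

Lemma sorted_map {A B} (P : A -> Prop) (R : A -> A -> Prop) (R' : B -> B -> Prop) (f : A -> B) l :
  (forall a b, P a -> P b -> R a b -> R' (f a) (f b)) -> Forall P l -> Sorted R l -> Sorted R' (map f l).
Proof.
  intros Hf HP HS. induction HS; simpl; constructor.
  - inversion HP; auto.
  - inversion HP; subst. destruct H; simpl; constructor.
    inversion H3; subst. apply Hf; auto.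
Qed.

Section Map.
Variable L : lang.
Variables (R1 : Type) (ltR1 : R1 -> R1 -> Prop) (C1 : R1 -> Type) (ltC1 : forall i, C1 i -> C1 i -> Prop).
Variables (R2 : Type) (ltR2 : R2 -> R2 -> Prop) (C2 : R2 -> Type) (ltC2 : forall i, C2 i -> C2 i -> Prop).

Definition Sig1W (SK : Cidx R1 C1 -> Prop) (SR : R1 -> Prop) (phi : LSKfm L (Cidx R1 C1)) : Prop :=
  (exists p, (T_skolem p \/ linord_axioms p) /\ phi = emb p) \/
  (exists a b, SK a /\ SK b /\
      ((lex R1 ltR1 C1 ltC1 a b /\ phi = ltf (L:=L) (cst a) (cst b)) \/
      (~ lex R1 ltR1 C1 ltC1 a b /\ phi = neg (ltf (L:=L) (cst a) (cst b))))) \/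
  (exists (tau : LSterm L) (ks : list (Cidx R1 C1)) (i : R1) (j : C1 i),
      Forall SK ks /\ SK (existT _ i j) /\ SR i /\
      ks <> [] /\ Sorted (lex R1 ltR1 C1 ltC1) ks /\ tbound tau <= length ks /\
      (forall k, In k ks -> ltR1 (projT1 k) i) /\
      phi = ltf (L:=L) (instc L R1 C1 ks tau) (cst (existT _ i j))) \/
  (exists (tau : LSterm L) (pre post : list (Cidx R1 C1)) (iN p : R1) (j : C1 p)
          (u : R1) (ls : list (C1 u)),
      Forall SK (pre ++ post) /\ SK (existT _ p j) /\
      Forall SK (map (fun l => existT _ u l) ls) /\ SR iN /\ SR p /\ SR u /\
      post <> [] /\ Sorted (lex R1 ltR1 C1 ltC1) (pre ++ post) /\
      tbound tau <= length (pre ++ post) /\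
      (forall k, In k post -> projT1 k = iN) /\
      (forall k, In k pre -> projT1 k <> iN) /\
      gt1 R1 ltR1 iN /\ is_pred R1 ltR1 p iN /\ (ltR1 iN u \/ u = iN) /\
      length ls = length post /\
      Sorted (lex R1 ltR1 C1 ltC1) (pre ++ map (fun l => existT _ u l) ls) /\
      phi = imp (ltf (L:=L) (instc L R1 C1 (pre ++ post) tau) (cst (existT _ p j)))
                (eqf (instc L R1 C1 (pre ++ post) tau)
                     (instc L R1 C1 (pre ++ map (fun l => existT _ u l) ls) tau))).

Lemma Sig1W_mono SK SR SK' SR' phi : Sig1W SK SR phi ->
  (forall k, SK k -> SK' k) -> (forall r, SR r -> SR' r) -> Sig1W SK' SR' phi.
Proof.
  intros H HK HR.
  destruct H as [H|[H|[H|H]]]; [left; exact H|right;left|right;right;left|right;right;right].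
  - destruct H as [a [b [H1 [H2 H3]]]]. exists a, b; auto.
  - destruct H as [tau [ks [i [j [H1 [H2 [H3 H4]]]]]]]. exists tau, ks, i, j.
    split; [eapply Forall_impl; eauto|]. auto.
  - destruct H as [tau [pre [post [iN [p [j [u [ls [H1 [H2 [H3 [H4 [H5 [H6 H7]]]]]]]]]]]]]].
    exists tau, pre, post, iN, p, j, u, ls.
    split; [eapply Forall_impl; eauto|]. split; auto.
    split; [eapply Forall_impl; eauto|]. auto.
Qed.

Lemma Forall_In_iff {A} (l : list A) (P : A -> Prop) : Forall P l <-> (forall x, In x l -> P x).
Proof. apply Forall_forall. Qed.

Lemma Sigma1_W phi : Sigma1 L ltR1 ltC1 phi ->
  exists KL RL, Sig1W (fun k => In k KL) (fun r => In r RL) phi.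
Proof.
  intros [H|[H|[H|H]]].
  - exists [], []. left; exact H.
  - destruct H as [a [b H]]. exists [a; b], []. right; left. exists a, b. simpl; auto.
  - destruct H as [tau [ks [i [j H]]]]. exists (existT _ i j :: ks), [i].
    right; right; left. exists tau, ks, i, j. split.
    + apply Forall_forall. simpl; auto.
    + simpl; auto.
  - destruct H as [tau [pre [post [iN [p [j [u [ls H]]]]]]]].
    exists (existT _ p j :: (pre ++ post) ++ map (fun l => existT _ u l) ls), [iN; p; u].
    right; right; right. exists tau, pre, post, iN, p, j, u, ls.
    split; [apply Forall_forall; intros; simpl; right; apply in_or_app; auto|].
    split; [simpl; auto|].
    split; [apply Forall_forall; intros; simpl; right; apply in_or_app; auto|].
    simpl; intuition.
Qed.

Variable fr : R1 -> R2.
Variable fc : forall i, C1 i -> C2 (fr i).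
Definition gk (k : Cidx R1 C1) : Cidx R2 C2 := existT C2 (fr (projT1 k)) (fc (projT1 k) (projT2 k)).
Definition gs (s : symK L (Cidx R1 C1)) : symK L (Cidx R2 C2) :=
  match s with inl a => inl a | inr k => inr (gk k) end.

Lemma fmap_emb (p : LSfm L) : fmap gs (emb (K:=Cidx R1 C1) p) = emb p.
Proof. unfold emb. rewrite fmap_fmap. reflexivity. Qed.

Lemma tmap_instc ks tau : tmap gs (instc L R1 C1 ks tau) = instc L R2 C2 (map gk ks) tau.
Proof.
  unfold instc. rewrite tmap_tsubst. unfold embt. rewrite tmap_tmap. simpl.
  f_equal. apply functional_extensionality. intros m. rewrite nth_error_map.
  destruct (nth_error ks m); reflexivity.
Qed.

Variables (SK : Cidx R1 C1 -> Prop) (SR : R1 -> Prop).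
Hypothesis irr1 : forall x, ~ ltR1 x x.
Hypothesis irr2 : forall x, ~ ltR2 x x.
Hypothesis Hc : forall k, SK k -> SR (projT1 k).
Hypothesis HR1 : forall r r', SR r -> SR r' -> (ltR1 r r' <-> ltR2 (fr r) (fr r')).
Hypothesis HR2 : forall r r', SR r -> SR r' -> fr r = fr r' -> r = r'.
Hypothesis HR3 : forall r, SR r -> gt1 R1 ltR1 r -> gt1 R2 ltR2 (fr r).
Hypothesis HR4 : forall r r', SR r -> SR r' -> is_pred R1 ltR1 r r' -> is_pred R2 ltR2 (fr r) (fr r').
Hypothesis HC : forall i x y, SK (existT _ i x) -> SK (existT _ i y) ->
  (ltC1 i x y <-> ltC2 (fr i) (fc i x) (fc i y)).

Lemma lex_iff a b : SK a -> SK b -> (lex R1 ltR1 C1 ltC1 a b <-> lex R2 ltR2 C2 ltC2 (gk a) (gk b)).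
Proof.
  intros Ha Hb. destruct a as [ia xa], b as [ib xb].
  destruct (excluded_middle_informative (ia = ib)) as [E|E].
  - subst ib. unfold gk; simpl. rewrite !lex_same; auto.
  - pose proof (Hc _ Ha) as Ra. pose proof (Hc _ Hb) as Rb. simpl in Ra, Rb.
    rewrite lex_diff by (simpl; auto). unfold gk. rewrite lex_diff by (simpl; intro; apply E; apply HR2; auto).
    simpl. apply HR1; auto.
Qed.

Lemma map_sorted l : Forall SK l -> Sorted (lex R1 ltR1 C1 ltC1) l -> Sorted (lex R2 ltR2 C2 ltC2) (map gk l).
Proof.
  intros. eapply sorted_map; eauto. intros a b Ha Hb Hl. apply lex_iff; auto.
Qed.

Lemma map_axiom phi : Sig1W SK SR phi -> Sigma1 L ltR2 ltC2 (fmap gs phi).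
Proof.
  intros [H|[H|[H|H]]].
  - left. destruct H as [p [Hp ->]]. exists p. rewrite fmap_emb. auto.
  - right; left. destruct H as [a [b [Ha [Hb [[Hl ->]|[Hl ->]]]]]]; exists (gk a), (gk b).
    + left. split; [apply lex_iff; auto| reflexivity].
    + right. split; [rewrite <- lex_iff; auto| reflexivity].
  - right; right; left.
    destruct H as [tau [ks [i [j [H1 [H2 [H3 [H4 [H5 [H6 [H7 ->]]]]]]]]]]].
    exists tau, (map gk ks), (fr i), (fc i j). repeat match goal with |- _ /\ _ => split end.
    + destruct ks; simpl; congruence.
    + apply map_sorted; auto.
    + rewrite length_map; auto.
    + intros k Hk. apply in_map_iff in Hk. destruct Hk as [k0 [<- Hk0]].
      unfold gk; simpl. rewrite Forall_forall in H1. apply HR1; auto;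
      apply (Hc _ (H1 _ Hk0)).
    + simpl. rewrite tmap_instc. reflexivity.
  - right; right; right.
    destruct H as (tau & pre & post & iN & p & j & u & ls & H1 & H2 & H3 & H4 & H5 & H6 & Hpo & Hs & Htb & Hpost & Hpre & Hg & Hp & Hu & Hlen & Hs2 & ->).
    rewrite Forall_forall in H1, H3.
    exists tau, (map gk pre), (map gk post), (fr iN), (fr p), (fc p j), (fr u), (map (fc u) ls).
    repeat match goal with |- _ /\ _ => split end.
    + destruct post; simpl; congruence.
    + rewrite <- map_app. apply map_sorted; auto. apply Forall_forall; auto.
    + rewrite <- map_app, length_map; auto.
    + intros k Hk. apply in_map_iff in Hk. destruct Hk as [k0 [<- Hk0]]. unfold gk; simpl.
      rewrite Hpost; auto.
    + intros k Hk E. apply in_map_iff in Hk. destruct Hk as [k0 [<- Hk0]]. unfold gk in E; simpl in E.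
      apply (Hpre k0 Hk0). apply HR2; auto. apply (Hc _ (H1 k0 (in_or_app _ _ _ (or_introl Hk0)))).
    + apply HR3; auto.
    + apply HR4; auto.
    + destruct Hu as [Hu|Hu]; [left; apply HR1; auto| right; congruence].
    + rewrite !length_map; auto.
    + assert (Em: map (fun l => existT (fun i => C2 i) (fr u) l) (map (fc u) ls) = map gk (map (fun l => existT (fun i => C1 i) u l) ls)) by (rewrite !map_map; reflexivity).
      rewrite Em.
      rewrite <- map_app. apply map_sorted; auto. apply Forall_forall.
      intros x Hx. apply in_app_or in Hx. destruct Hx; auto. apply H1. apply in_or_app; auto.
    + simpl. rewrite !tmap_instc. rewrite !map_app. rewrite !map_map. reflexivity.
Qed.
End Map.

Lemma min_nat (P : nat -> Prop) : (exists n, P n) -> exists n, P n /\ forall k, k < n -> ~ P k.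
Proof.
  intros [n Hn]. induction n as [n IH] using (well_founded_induction lt_wf).
  destruct (classic (exists k, k < n /\ P k)) as [[k [Hk Pk]]|N].
  - apply (IH k Hk Pk).
  - exists n. split; auto. intros k Hk Pk. apply N; eauto.
Qed.

Section WO.
Variables (A : Type) (lt : A -> A -> Prop) (Hwo : well_order lt).
Lemma wo_irr x : ~ lt x x. Proof. apply Hwo. Qed.
Lemma wo_trans x y z : lt x y -> lt y z -> lt x z. Proof. apply Hwo. Qed.
Lemma wo_tri x y : lt x y \/ x = y \/ lt y x. Proof. apply Hwo. Qed.
Lemma wo_asym x y : lt x y -> ~ lt y x.
Proof. intros H1 H2. apply (wo_irr x). eapply wo_trans; eauto. Qed.

Lemma exists_least (P : A -> Prop) x : P x -> exists m, P m /\ forall y, P y -> ~ lt y m.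
Proof.
  destruct Hwo as [_ [_ [_ wf]]]. revert x.
  intros x; induction x as [x IH] using (well_founded_induction wf). intros Px.
  destruct (classic (exists y, P y /\ lt y x)) as [[y [Py Hy]]|N].
  - apply (IH y Hy Py).
  - exists x. split; auto. intros y Py Hy. apply N; eauto.
Qed.

Variable ia : inhabited A.
Definition least (P : A -> Prop) : A := epsilon ia (fun m => P m /\ forall y, P y -> ~ lt y m).
Lemma least_spec P : (exists x, P x) -> P (least P) /\ forall y, P y -> ~ lt y (least P).
Proof.
  intros [x Px]. unfold least. apply epsilon_spec. apply (exists_least P x Px).
Qed.
Definition next x := least (fun y => lt x y).
Fixpoint ch n := match n with 0 => least (fun _ => True) | S n => next (ch n) end.
Definition step n := lt (ch n) (ch (S n)) /\ forall z, ~ (lt (ch n) z /\ lt z (ch (S n))).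
Lemma step_of n : (exists y, lt (ch n) y) -> step n.
Proof.
  intros H. destruct (least_spec _ H) as [H1 H2]. split; auto.
  intros z [Hz1 Hz2]. apply (H2 z Hz1 Hz2).
Qed.
Lemma ch0_least y : ~ lt y (ch 0).
Proof.
  destruct (least_spec (fun _ => True)) as [_ H].
  - destruct ia as [a]; exists a; auto.
  - intro; eapply H; eauto.
Qed.
Definition valid n := forall k, k < n -> step k.
Lemma ch_mono n : valid n -> forall i j, i < j -> j <= n -> lt (ch i) (ch j).
Proof.
  intros Hv i j; induction j; intros Hij Hjn; [lia|].
  destruct (Nat.eq_dec i j) as [->|Ne].
  - apply (Hv j); lia.
  - eapply wo_trans; [apply IHj; lia|]. apply (Hv j); lia.
Qed.
Lemma cover n : valid n -> forall x, ~ lt (ch n) x -> exists i, i <= n /\ x = ch i.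
Proof.
  induction n; intros Hv x Hx.
  - exists 0. split; auto. destruct (wo_tri x (ch 0)) as [H|[H|H]]; auto.
    + exfalso; eapply ch0_least; eauto.
    + contradiction.
  - destruct (wo_tri x (ch (S n))) as [H|[H|H]]; [|exists (S n); auto|contradiction].
    destruct (classic (lt (ch n) x)) as [H'|H'].
    + exfalso. apply ((proj2 (Hv n ltac:(lia))) x). auto.
    + destruct (IHn ltac:(intros k Hk; apply Hv; lia) x H') as [i [Hi ->]]. exists i; split; auto.
Qed.
Lemma cover_list n : valid n -> (forall x, ~ lt (ch n) x) -> forall x, In x (map ch (seq 0 (S n))).
Proof.
  intros Hv Hm x. destruct (cover n Hv x (Hm x)) as [i [Hi ->]].
  apply in_map. apply in_seq. lia.
Qed.
Lemma valid_of_size n : (exists l : list A, NoDup l /\ S n <= length l) -> valid n.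
Proof.
  induction n; intros Hl.
  - intros k Hk; lia.
  - assert (Hv : valid n) by (apply IHn; destruct Hl as [l [H1 H2]]; exists l; split; [auto|lia]).
    intros k Hk. destruct (Nat.eq_dec k n) as [->|Ne]; [|apply Hv; lia].
    apply step_of. apply NNPP. intros N.
    destruct Hl as [l [H1 H2]].
    assert (incl l (map ch (seq 0 (S n)))).
    { intros x _. apply cover_list; auto. intros y Hy. apply N; eauto. }
    pose proof (NoDup_incl_length H1 H). rewrite length_map, length_seq in H0. lia.
Qed.
Lemma ch_inj : (forall n, valid n) -> forall i j, ch i = ch j -> i = j.
Proof.
  intros Hv i j E. destruct (Nat.lt_trichotomy i j) as [H|[H|H]]; auto; exfalso.
  - pose proof (ch_mono j (Hv j) i j H (le_n _)). rewrite E in H0. eapply wo_irr; eauto.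
  - pose proof (ch_mono i (Hv i) j i H (le_n _)). rewrite E in H0. eapply wo_irr; eauto.
Qed.
End WO.

Lemma no_max_card A (lt : A -> A -> Prop) : is_cardinal lt -> inj nat A ->
  forall a, (forall y, ~ lt a y) -> False.
Proof.
  intros [Hwo Hc] [f Hf] a Ha.
  pose (ia := inhabits a).
  assert (below : forall x, x <> a -> lt x a).
  { intros x Hx. destruct (wo_tri _ _ Hwo x a) as [H|[H|H]]; [auto|contradiction|exfalso; apply (Ha x H)]. }
  destruct (classic (exists n, ch A lt ia n = a)) as [Hn|Hn].
  - apply min_nat in Hn. destruct Hn as [n [Hn Hmin]].
    assert (Hv : valid A lt ia n).
    { intros k Hk. apply step_of; auto. exists a. apply below. apply Hmin; auto. }
    assert (incl (map f (seq 0 (S (S n)))) (map (ch A lt ia) (seq 0 (S n)))).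
    { intros x _. apply cover_list; auto. rewrite Hn. auto. }
    apply NoDup_incl_length in H.
    + rewrite !length_map, !length_seq in H. lia.
    + apply Injective_map_NoDup; [exact Hf|apply seq_NoDup].
  - assert (Hne : forall n, ch A lt ia n <> a) by (intros n E; apply Hn; eauto).
    assert (Hv : forall n, valid A lt ia n).
    { intros n k Hk. apply step_of; auto. exists a. apply below; auto. }
    pose (F0 := fun x => if excluded_middle_informative (x = a) then (ch A lt ia) 0
                     else if excluded_middle_informative (exists n, x = (ch A lt ia) n) then next A lt ia x else x).
    assert (HF : forall x, lt (F0 x) a).
    { intros x. unfold F0. destruct (excluded_middle_informative (x = a)); [apply below, Hne|].
      destruct (excluded_middle_informative (exists n, x = (ch A lt ia) n)) as [[m0 ->]|]; [apply below, (Hne (S m0))|].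
      apply below; auto. }
    apply (Hc a). exists (fun x => exist _ (F0 x) (HF x)). split.
    + intros x y E. apply (f_equal (@proj1_sig _ _)) in E. simpl in E. unfold F0 in E.
      destruct (excluded_middle_informative (x = a)) as [Ex|Ex];
      destruct (excluded_middle_informative (y = a)) as [Ey|Ey]; try congruence;
      try destruct (excluded_middle_informative (exists n, x = (ch A lt ia) n)) as [[n Hxn]|Nx];
      try destruct (excluded_middle_informative (exists n, y = (ch A lt ia) n)) as [[m Hym]|Ny]; try subst x; try subst y; auto.
      all: repeat (match goal with H: context[next _ _ _ (ch _ _ _ ?m)] |- _ => change (next A lt ia ((ch A lt ia) m)) with ((ch A lt ia) (S m)) in H end).
      all: try (exfalso; match goal with N : ~ (exists n, ?z = ch _ _ _ n) |- _ => solve [apply N; eauto] end).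
      all: try (match goal with H : ch _ _ _ ?i = ch _ _ _ ?j |- _ => apply (ch_inj A lt Hwo ia Hv) in H end); try congruence.
    + intros [y Hy].
      assert (Hya : y <> a) by (intro; subst; eapply wo_irr; eauto).
      destruct (classic (y = (ch A lt ia) 0)) as [E0|N0].
      * exists a. apply eq_sig_hprop; [intros; apply proof_irrelevance|]. simpl. unfold F0.
        destruct (excluded_middle_informative (a = a)); congruence.
      * destruct (classic (exists n, y = (ch A lt ia) (S n))) as [[n En]|NS].
        -- exists ((ch A lt ia) n). apply eq_sig_hprop; [intros; apply proof_irrelevance|]. simpl. unfold F0.
           destruct (excluded_middle_informative ((ch A lt ia) n = a)) as [E|_]; [exfalso; apply (Hne n); auto|].
           destruct (excluded_middle_informative (exists m, (ch A lt ia) n = (ch A lt ia) m)) as [_|N]; [auto|exfalso; apply N; eauto].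
        -- exists y. apply eq_sig_hprop; [intros; apply proof_irrelevance|]. simpl. unfold F0.
           destruct (excluded_middle_informative (y = a)) as [E|_]; [contradiction|].
           destruct (excluded_middle_informative (exists m, y = (ch A lt ia) m)) as [[[|m] Em]|_]; auto.
           ++ contradiction.
           ++ exfalso; apply NS; eauto.
Qed.

Lemma card_lt_step A B n : card_lt A B -> (exists l : list A, NoDup l /\ length l = n) ->
  exists l : list B, NoDup l /\ length l = S n.
Proof.
  intros [[f Hf] Hn] [l [Hl Hlen]].
  destruct (classic (exists b, ~ In b (map f l))) as [[b Hb]|N].
  - exists (b :: map f l). split.
    + constructor; auto. apply Injective_map_NoDup; auto.
    + simpl; rewrite length_map; auto.
  - exfalso. apply Hn.
    assert (H : forall b, exists a, In a l /\ f a = b).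
    { intros b. apply NNPP. intro N'. apply N. exists b. intro Hb. apply in_map_iff in Hb.
      destruct Hb as [a [E Ha]]. apply N'. eauto. }
    exists (fun b => proj1_sig (constructive_indefinite_description _ (H b))).
    intros x y E.
    pose proof (proj2_sig (constructive_indefinite_description _ (H x))) as [_ Ex].
    pose proof (proj2_sig (constructive_indefinite_description _ (H y))) as [_ Ey].
    rewrite <- Ex, <- Ey. rewrite E. reflexivity.
Qed.

Definition good (R1 : Type) (ltR1 : R1 -> R1 -> Prop) (C1 : R1 -> Type) (ltC1 : forall i, C1 i -> C1 i -> Prop)
  (R2 : Type) (ltR2 : R2 -> R2 -> Prop) (C2 : R2 -> Type) (ltC2 : forall i, C2 i -> C2 i -> Prop)
  (fr : R1 -> R2) (fc : forall i, C1 i -> C2 (fr i)) (KL : list (Cidx R1 C1)) (RL : list R1) : Prop :=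
  (forall r r', In r RL -> In r' RL -> (ltR1 r r' <-> ltR2 (fr r) (fr r'))) /\
  (forall r r', In r RL -> In r' RL -> fr r = fr r' -> r = r') /\
  (forall r, In r RL -> gt1 R1 ltR1 r -> gt1 R2 ltR2 (fr r)) /\
  (forall r r', In r RL -> In r' RL -> is_pred R1 ltR1 r r' -> is_pred R2 ltR2 (fr r) (fr r')) /\
  (forall i x y, In (existT _ i x) KL -> In (existT _ i y) KL ->
     (ltC1 i x y <-> ltC2 (fr i) (fc i x) (fc i y))).

Lemma gather L R ltR C ltC G (l : list (LSKfm L (Cidx R C))) :
  (forall p, In p l -> plus_theory G (Sigma1 L ltR ltC) p) ->
  exists KL RL, forall p, In p l -> plus_theory G (Sig1W L R ltR C ltC (fun k => In k KL) (fun r => In r RL)) p.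
Proof.
  induction l as [|p l IH]; intros H.
  - exists [], []. intros p [].
  - destruct IH as [KL [RL HKL]]; [intros; apply H; simpl; auto|].
    destruct (H p (or_introl eq_refl)) as [Hg|Hs].
    + exists KL, RL. intros q [<-|Hq]; auto. left; auto.
    + destruct (Sigma1_W L R ltR C ltC p Hs) as [KL' [RL' HW]].
      exists (KL ++ KL'), (RL ++ RL'). intros q [<-|Hq].
      * right. eapply Sig1W_mono; eauto; intros; apply in_or_app; auto.
      * destruct (HKL q Hq) as [?|W]; [left; auto|right].
        eapply Sig1W_mono; eauto; intros; apply in_or_app; auto.
Qed.

Lemma transfer_sigma L R1 ltR1 C1 ltC1 R2 ltR2 C2 ltC2 G :
  (forall x, ~ ltR1 x x) -> (forall x, ~ ltR2 x x) ->
  (forall KL RL, (forall k, In k KL -> In (projT1 k) RL) ->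
     exists fr fc, good R1 ltR1 C1 ltC1 R2 ltR2 C2 ltC2 fr fc KL RL) ->
  consistent (plus_theory G (Sigma1 L ltR2 ltC2)) -> consistent (plus_theory G (Sigma1 L ltR1 ltC1)).
Proof.
  intros irr1 irr2 H. apply transfer. intros l Hl.
  destruct (gather L R1 ltR1 C1 ltC1 G l Hl) as [KL [RL HKL]].
  destruct (H KL (RL ++ map (@projT1 _ _) KL)) as [fr [fc [G1 [G2 [G3 [G4 G5]]]]]].
  { intros k Hk. apply in_or_app; right; apply in_map; auto. }
  exists (gs L R1 C1 R2 C2 fr fc). intros p Hp.
  destruct (HKL p Hp) as [[q [Gq ->]]|W].
  - left. exists q. split; auto. apply fmap_emb.
  - right. eapply (map_axiom L R1 ltR1 C1 ltC1 R2 ltR2 C2 ltC2 fr fc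
                    (fun k => In k KL) (fun r => In r (RL ++ map (@projT1 _ _) KL))); eauto.
    + intros k Hk; apply in_or_app; right; apply in_map; auto.
    + eapply Sig1W_mono; eauto. intros; apply in_or_app; auto.
Qed.

Fixpoint cnt {A} (P : A -> Prop) (l : list A) : nat :=
  match l with
  | [] => 0
  | x :: l => (if excluded_middle_informative (P x) then 1 else 0) + cnt P l
  end.

Lemma cnt_mono {A} (P Q : A -> Prop) l : (forall x, In x l -> P x -> Q x) -> cnt P l <= cnt Q l.
Proof.
  induction l; simpl; intros H; auto.
  specialize (IHl (fun x Hx => H x (or_intror Hx))).
  destruct (excluded_middle_informative (P a)), (excluded_middle_informative (Q a)); try lia.
  exfalso; eauto.
Qed.

Lemma cnt_strict {A} (P Q : A -> Prop) l z : (forall x, In x l -> P x -> Q x) ->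
  In z l -> Q z -> ~ P z -> cnt P l < cnt Q l.
Proof.
  induction l; simpl; intros H Hz Qz Pz; [contradiction|].
  destruct Hz as [Ez|Hz]; [subst a|].
  - pose proof (cnt_mono P Q l (fun x Hx => H x (or_intror Hx))).
    destruct (excluded_middle_informative (P z)), (excluded_middle_informative (Q z)); try contradiction; lia.
  - specialize (IHl (fun x Hx => H x (or_intror Hx)) Hz Qz Pz).
    destruct (excluded_middle_informative (P a)), (excluded_middle_informative (Q a)); try lia.
    exfalso; eauto.
Qed.

Lemma cnt_ext {A} (P Q : A -> Prop) l : (forall x, In x l -> (P x <-> Q x)) -> cnt P l = cnt Q l.
Proof.
  intros H. apply Nat.le_antisymm; apply cnt_mono; intros x Hx; apply H; auto.
Qed.

Lemma cnt_plus1 {A} (P' P : A -> Prop) l r : NoDup l -> In r l ->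
  (forall x, In x l -> x <> r -> (P' x <-> P x)) -> P' r -> ~ P r -> cnt P' l = S (cnt P l).
Proof.
  induction l; simpl; intros Hn Hr H P'r Pr; [contradiction|].
  inversion Hn; subst.
  destruct Hr as [<-|Hr].
  - rewrite (cnt_ext P' P l).
    + destruct (excluded_middle_informative (P' a)), (excluded_middle_informative (P a)); try contradiction; lia.
    + intros x Hx. apply H; auto. intro; subst; contradiction.
  - rewrite IHl; auto. assert (a <> r) by (intro; subst; contradiction).
    destruct (excluded_middle_informative (P' a)) as [X|X], (excluded_middle_informative (P a)) as [Y|Y]; try lia.
    + exfalso; apply Y; apply H; auto.
    + exfalso; apply X; apply H; auto.
Qed.

Definition deceq {A} : forall x y : A, {x = y} + {x <> y} := fun x y => excluded_middle_informative (x = y).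

Lemma dir1 R ltR C ltC (HwR : well_order ltR) (HwC : forall i, well_order (ltC i))
  (KL : list (Cidx R C)) (RL : list R) :
  exists fr fc, good R ltR C ltC nat lt (fun _ => nat) (fun _ => lt) fr fc KL RL.
Proof.
  set (RLn := nodup deceq RL).
  assert (HIn : forall r, In r RL <-> In r RLn) by (intros; unfold RLn; rewrite nodup_In; tauto).
  assert (HND : NoDup RLn) by apply NoDup_nodup.
  set (Q := fun s => ~ exists t, In t RLn /\ is_pred R ltR s t).
  set (fr := fun r => 2 + cnt (fun s => ltR s r) RLn + cnt (fun s => ltR s r /\ Q s) RLn).
  set (fc := fun i (c : C i) => cnt (fun k => exists y, k = existT C i y /\ ltC i y c) KL).
  assert (mono : forall r r', In r RL -> ltR r r' -> fr r < fr r').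
  { intros r r' Hr H. unfold fr.
    pose proof (cnt_strict (fun s => ltR s r) (fun s => ltR s r') RLn r) as X.
    pose proof (cnt_mono (fun s => ltR s r /\ Q s) (fun s => ltR s r' /\ Q s) RLn) as Y.
    assert (cnt (fun s => ltR s r) RLn < cnt (fun s => ltR s r') RLn).
    { apply X; auto. - intros; eapply wo_trans; eauto. - apply HIn; auto. - apply wo_irr; auto. }
    assert (cnt (fun s => ltR s r /\ Q s) RLn <= cnt (fun s => ltR s r' /\ Q s) RLn).
    { apply Y. intros x _ [H1 H2]; split; auto. eapply wo_trans; eauto. }
    lia. }
  exists fr, fc. split; [|split; [|split; [|split]]].
  - intros r r' Hr Hr'. split; [apply mono; auto|].
    intros H. destruct (wo_tri _ _ HwR r r') as [X|[X|X]]; auto; subst; [lia|].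
    pose proof (mono r' r Hr' X). lia.
  - intros r r' Hr Hr' E. destruct (wo_tri _ _ HwR r r') as [X|[X|X]]; auto.
    + pose proof (mono r r' Hr X); lia.
    + pose proof (mono r' r Hr' X); lia.
  - intros r _ _. exists 0, 1. unfold fr. lia.
  - intros r r' Hr Hr' [Hp1 Hp2].
    assert (Hbet : forall x, x <> r -> (ltR x r' <-> ltR x r)).
    { intros x Hx. split.
      - intros H. destruct (wo_tri _ _ HwR x r) as [X|[X|X]]; auto; [contradiction|].
        exfalso; apply (Hp2 x); auto.
      - intros H; eapply wo_trans; eauto. }
    assert (E : fr r' = S (fr r)).
    { unfold fr.
      assert (E1 : cnt (fun s => ltR s r') RLn = S (cnt (fun s => ltR s r) RLn)).
      { apply (cnt_plus1 _ _ RLn r); [auto | apply HIn; auto | intros x _ Hx; apply Hbet; auto | auto | apply wo_irr; auto]. }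
      assert (E2 : cnt (fun s => ltR s r' /\ Q s) RLn = cnt (fun s => ltR s r /\ Q s) RLn).
      { apply cnt_ext. intros x Hx. destruct (deceq x r) as [->|Ne].
        + split; intros [_ Hq]; exfalso; apply Hq; exists r'; (split; [apply HIn; auto|split; auto]).
        + rewrite Hbet; auto. tauto. }
      lia. }
    rewrite E. split; [lia|]. intros z [Z1 Z2]; lia.
  - intros i x y Hx Hy.
    assert (st : forall x y, In (existT C i x) KL -> ltC i x y -> fc i x < fc i y).
    { intros a b Ha Hab. unfold fc. apply (cnt_strict _ _ KL (existT C i a)).
      - intros k _ [y0 [-> Hy0]]. exists y0; split; auto. eapply wo_trans; eauto.
      - auto.
      - exists a; split; auto.
      - intros [y0 [E H0]]. apply inj_pair2 in E. subst. exact (wo_irr _ _ (HwC i) _ H0). }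
    split; [apply st; auto|]. simpl. intros H.
    destruct (wo_tri _ _ (HwC i) x y) as [X|[X|X]].
    + auto.
    + subst; lia.
    + pose proof (st y x Hy X); lia.
Qed.

Lemma max_bound (l : list nat) x : In x l -> x <= fold_right max 0 l.
Proof. induction l; simpl; [intros []|]. intros [->|H]; [lia|]. specialize (IHl H); lia. Qed.

Lemma dir2 E ltE M ltM (HwE : well_order ltE) (HwM : forall i, well_order (ltM i)) (ie : inhabited E)
  (Hv : forall n, valid E ltE ie n)
  (Hsize : forall n, exists l : list (M (ch E ltE ie n)), NoDup l /\ length l = n)
  (KL : list (Cidx nat (fun _ => nat))) (RL : list nat) :
  exists fr fc, good nat lt (fun _ => nat) (fun _ => lt) E ltE M ltM fr fc KL RL.
Proof.
  set (N := S (fold_right max 0 (map (fun k : Cidx nat (fun _ : nat => nat) => (projT2 k : nat)) KL))).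
  assert (HN : forall k, In k KL -> projT2 k < N).
  { intros k Hk. unfold N. pose proof (max_bound (map (fun k : Cidx nat (fun _ : nat => nat) => (projT2 k : nat)) KL) (projT2 k)). 
    assert (In (projT2 k) (map (fun k : Cidx nat (fun _ : nat => nat) => (projT2 k : nat)) KL)) by (apply in_map; auto). specialize (H H0). lia. }
  set (K := N + 2).
  set (fr := fun n => ch E ltE ie (K + n)).
  assert (inhM : forall n, inhabited (M (fr n))).
  { intros n. destruct (Hsize (K + n)) as [[|a l] [_ Hl]]; [simpl in Hl; unfold K in Hl; lia|].
    constructor; exact a. }
  set (fc := fun n (c : nat) => ch (M (fr n)) (ltM (fr n)) (inhM n) c).
  assert (HvM : forall n, valid (M (fr n)) (ltM (fr n)) (inhM n) N).
  { intros n. apply (valid_of_size _ _ (HwM (fr n))). destruct (Hsize (K + n)) as [l [H1 H2]].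
    exists l; split; auto. unfold fr. rewrite H2. unfold K. lia. }
  assert (monoE : forall r r', r < r' -> ltE (fr r) (fr r')).
  { intros r r' H. unfold fr. apply (ch_mono E ltE HwE ie (K + r') (Hv _)); lia. }
  exists fr, fc. split; [|split; [|split; [|split]]].
  - intros r r' _ _. split; [apply monoE|].
    intros H. destruct (Nat.lt_trichotomy r r') as [X|[X|X]]; auto.
    + subst. exfalso; eapply (wo_irr _ _ HwE); eauto.
    + exfalso; eapply (wo_asym _ _ HwE); eauto.
  - intros r r' _ _ H. unfold fr in H. apply (ch_inj E ltE HwE ie Hv) in H. lia.
  - intros r _ _. exists (ch E ltE ie 0), (ch E ltE ie 1). split.
    + apply (ch_mono E ltE HwE ie 1 (Hv _)); lia.
    + unfold fr. apply (ch_mono E ltE HwE ie (K + r) (Hv _)); unfold K; lia.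
  - intros r r' _ _ [H1 H2].
    assert (r' = S r).
    { destruct (Nat.eq_dec r' (S r)); auto. exfalso. apply (H2 (S r)); lia. }
    subst r'. unfold fr. rewrite Nat.add_succ_r. destruct (Hv (S (K + r)) (K + r) ltac:(lia)) as [S1 S2].
    split; auto.
  - intros i x y Hx Hy. apply HN in Hx. apply HN in Hy. simpl in Hx, Hy.
    assert (st : forall a b, a < b -> b < N -> ltM (fr i) (fc i a) (fc i b)).
    { intros a b Hab Hb. unfold fc. apply (ch_mono _ _ (HwM (fr i)) (inhM i) N (HvM i)); lia. }
    split; [intros; apply st; auto|].
    intros H. destruct (Nat.lt_trichotomy x y) as [X|[X|X]]; auto.
    + subst. exfalso; eapply (wo_irr _ _ (HwM (fr i))); eauto.
    + exfalso; eapply (wo_asym _ _ (HwM (fr i))); [apply st|]; eauto.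
Qed.

Lemma list_max A (lt : A -> A -> Prop) (Hwo : well_order lt) (l : list A) :
  l <> [] -> exists m, In m l /\ forall z, In z l -> z = m \/ lt z m.
Proof.
  induction l as [|a l IH]; intros H; [congruence|].
  destruct l as [|b l'].
  - exists a. split; simpl; auto. intros z [->|[]]; auto.
  - destruct IH as [m [Hm Hz]]; [congruence|].
    destruct (wo_tri _ _ Hwo a m) as [X|[X|X]].
    + exists m. split; [right; auto|]. intros z [<-|Hz']; auto.
    + subst. exists m. split; [left; auto|]. intros z [<-|Hz']; auto.
    + exists a. split; [left; auto|]. intros z [<-|Hz']; auto.
      destruct (Hz z Hz') as [->|Y]; auto. right; eapply wo_trans; eauto.
Qed.

Lemma E_facts Lam (ltL : Lam -> Lam -> Prop) E (ltE : E -> E -> Prop) :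
  singular_cardinal ltL ltE ->
  well_order ltE /\ exists ie : inhabited E, forall n, valid E ltE ie n.
Proof.
  intros [HcL [[f Hf] [[HcE [[h Hh] _]] _]]].
  assert (HwE : well_order ltE) by apply HcE.
  assert (HwL : well_order ltL) by apply HcL.
  split; auto.
  destruct (Hh (f 0)) as [y0 [[e _] _]].
  exists (inhabits e).
  set (ie := inhabits e).
  assert (nomax : forall x, exists y, ltE x y).
  { intros x. apply NNPP. intros N.
    assert (Hx : forall y, ~ ltE x y) by (intros y1 Hy; apply N; eauto).
    assert (below : forall z, z <> x -> ltE z x).
    { intros z Hz. destruct (wo_tri _ _ HwE z x) as [X|[X|X]]; [auto|contradiction|exfalso; apply (Hx z X)]. }
    destruct (classic (exists n, ch E ltE ie n = x)) as [Hn|Hn].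
    - apply min_nat in Hn. destruct Hn as [n [Hn Hmin]].
      assert (Hv : valid E ltE ie n).
      { intros k Hk. apply step_of; auto. exists x. apply below. apply Hmin; auto. }
      assert (Hcov : forall z, In z (map (ch E ltE ie) (seq 0 (S n)))).
      { apply cover_list; auto. rewrite Hn. auto. }
      destruct (list_max Lam ltL HwL (map h (map (ch E ltE ie) (seq 0 (S n))))) as [m [Hm Hmax]].
      { simpl. congruence. }
      apply (no_max_card Lam ltL HcL (ex_intro _ f Hf) m).
      intros z Hz. destruct (Hh z) as [w [[e' <-] Hw]].
      assert (In (h e') (map h (map (ch E ltE ie) (seq 0 (S n))))) by (apply in_map; apply Hcov).
      destruct (Hmax _ H) as [E1|E1].
      + rewrite E1 in Hw. destruct Hw as [Hw| ->]; [eapply (wo_asym _ _ HwL); eauto|eapply (wo_irr _ _ HwL); eauto].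
      + destruct Hw as [Hw| ->].
        * eapply (wo_asym _ _ HwL); [exact Hz|]. eapply wo_trans; eauto.
        * eapply (wo_asym _ _ HwL); eauto.
    - assert (Hv : forall n, valid E ltE ie n).
      { intros n k Hk. apply step_of; auto. exists x. apply below. intro; apply Hn; eauto. }
      apply (no_max_card E ltE HcE (ex_intro _ (ch E ltE ie) (ch_inj E ltE HwE ie Hv)) x Hx). }
  intros n k Hk. apply step_of; auto.
Qed.

Lemma size_lemma E (ltE : E -> E -> Prop) M (ltM : forall i, M i -> M i -> Prop) ie
  (Hinc : forall i i', ltE i i' -> card_lt (M i) (M i')) (Hv : forall n, valid E ltE ie n) :
  forall n, exists l : list (M (ch E ltE ie n)), NoDup l /\ length l = n.
Proof.
  induction n.
  - exists []. split; [constructor|auto].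
  - apply (card_lt_step (M (ch E ltE ie n))); auto. apply Hinc. apply (Hv (S n) n); lia.
Qed.

Theorem lemma3p1 (L : lang)
  (Lam : Type) (ltL : Lam -> Lam -> Prop)                 (* lambda *)
  (E : Type) (ltE : E -> E -> Prop)                       (* eta = cf(lambda) *)
  (M : E -> Type) (ltM : forall i, M i -> M i -> Prop)    (* mu_i, i < eta *)
  (Hlam : singular_cardinal ltL ltE)
  (Hmu : increasing_seq_with_limit ltE M ltM Lam)
  (G : LSfm L -> Prop) (HG : LS_theory G) :
  consistent (plus_theory G (Sigma1 L ltE ltM)) <->
  consistent (plus_theory G (Sigma1_star L)).
Proof.
  destruct (E_facts Lam ltL E ltE Hlam) as [HwE [ie Hv]].
  destruct Hmu as [HcM [Hinc _]].
  assert (HwM : forall i, well_order (ltM i)) by (intros i; apply HcM).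
  unfold Sigma1_star. split.
  - apply (transfer_sigma L nat lt (fun _ => nat) (fun _ => lt) E ltE M ltM G).
    + apply Nat.lt_irrefl.
    + apply (wo_irr _ _ HwE).
    + intros KL RL _. apply (dir2 E ltE M ltM HwE HwM ie Hv). apply (size_lemma E ltE M ltM ie Hinc Hv).
  - apply (transfer_sigma L E ltE M ltM nat lt (fun _ => nat) (fun _ => lt) G).
    + apply (wo_irr _ _ HwE).
    + apply Nat.lt_irrefl.
    + intros KL RL _. apply dir1; auto.
Qed.
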